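(* Let $\alpha\in(0,1)$, $\beta=1/\alpha$, and $f=f_{M_1}$. Let $(x_n)_{n\ge0}$ be the sequence defined in the context. Then $$x_n=\frac{1}{(\alpha M_0(n)\,n)^{\beta}}+O\Big(\frac{\log n}{n^{1+\beta}}\Big),\qquad\text{where } M_0(n)=\frac1n\sum_{j=1}^nM_1(x_j).$$
   Context: $f_{M_1}(x)=x(1+M_1(x)x^\alpha)$ on $[0,1/2]$, $2x-1$ on $(1/2,1]$, with $M_1(x)=C_0\,2^{-\{c_1^{-1}\log x\}}$ ($\{\cdot\}$ fractional part, $\{x\}=\{-x\}$ for $x<0$), $c_1>0$, and $C_0$ chosen so that $f_{M_1}((1/2)^-)=1$. The discontinuity set in $(0,1/2)$ is $\mathcal C=\{s_\ell=e^{-\ell c_1}:\ell\ge1\}$; at $s_\ell$ the one-sided limits are $f(s_\ell^+)=s_\ell+C_0s_\ell^{1+\alpha}$ and $f(s_\ell^-)=s_\ell+\frac{C_0}2s_\ell^{1+\alpha}$. The sequence $(x_n)$: $x_0=1/2$; given $x_n$, if $x_n\in[f(s_\ell^-),f(s_\ell^+)]$ for some $\ell$ set $x_{n+1}=s_\ell$; otherwise set $x_{n+1}$ to be the unique point of $(0,x_n)$ with $f(x_{n+1})=x_n$. Then $x_n\downarrow0$, $f^k(x_n)\in(0,1/2)$ for $k<n$ and $f^n(x_n)=1/2$ (with one-sided values at discontinuities). Note $M_0(n)\in[C_0/2,C_0]$. *)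

(* Defs.v *)
From Stdlib Require Import Reals Lra Lia ClassicalEpsilon.
Open Scope R_scope.

(* Fractional part with the paper's convention {x} = {-x} for x < 0. *)
Definition fracs (y : R) : R :=
  if Rlt_dec y 0 then frac_part (- y) else frac_part y.

Definition M1 (c1 C0 : R) (x : R) : R :=
  C0 * Rpower 2 (- fracs (ln x / c1)).

Definition fM1 (alpha c1 C0 : R) (x : R) : R :=
  if Rle_dec x (1/2) then x * (1 + M1 c1 C0 x * Rpower x alpha)
  else 2 * x - 1.

(* discontinuity points s_l = e^{-l c1} and one-sided limits there *)
Definition s_pt (c1 : R) (l : nat) : R := exp (- INR l * c1).
Definition f_plus (alpha c1 C0 : R) (l : nat) : R :=
  s_pt c1 l + C0 * Rpower (s_pt c1 l) (1 + alpha).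
Definition f_minus (alpha c1 C0 : R) (l : nat) : R :=
  s_pt c1 l + C0 / 2 * Rpower (s_pt c1 l) (1 + alpha).

Definition in_jump (alpha c1 C0 : R) (x : R) : Prop :=
  exists l : nat, (1 <= l)%nat /\ f_minus alpha c1 C0 l <= x <= f_plus alpha c1 C0 l.

(* One backward step: if x lies in a jump interval [f(s_l^-), f(s_l^+)] go to s_l,
   otherwise take the (unique) preimage of x in (0, x). *)
Definition next_pt (alpha c1 C0 : R) (x : R) : R :=
  epsilon (inhabits 0) (fun y =>
    (exists l : nat, (1 <= l)%nat /\
        f_minus alpha c1 C0 l <= x <= f_plus alpha c1 C0 l /\ y = s_pt c1 l)
    \/ (~ in_jump alpha c1 C0 x /\ 0 < y < x /\ fM1 alpha c1 C0 y = x)).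

Fixpoint xseq (alpha c1 C0 : R) (n : nat) : R :=
  match n with
  | O => 1/2
  | S m => next_pt alpha c1 C0 (xseq alpha c1 C0 m)
  end.

Definition M0 (alpha c1 C0 : R) (n : nat) : R :=
  / INR n * sum_f_R0 (fun j => M1 c1 C0 (xseq alpha c1 C0 (S j))) (pred n).

(* Main.v *)
Require Import Defs.
From Stdlib Require Import Reals.
From Stdlib Require Import Lra Lia Ranalysis5 ClassicalEpsilon.
Open Scope R_scope.

Lemma Rp_pos x y : 0 < Rpower x y.
Proof. unfold Rpower; apply exp_pos. Qed.

Lemma Rp_mvt q a b : 0 < a -> a < b ->
  exists xi, a < xi < b /\
   Rpower b (- q) - Rpower a (- q) = - q * Rpower xi (- q - 1) * (b - a).
Proof.
  intros Ha Hab.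
  destruct (MVT_cor2 (fun x => Rpower x (-q)) (fun x => -q * Rpower x (-q - 1)) a b Hab)
    as [c [Hc1 Hc2]].
  - intros c Hc. apply derivable_pt_lim_power. lra.
  - exists c; split; [lra|]. rewrite Hc1; ring.
Qed.

Lemma Rp_le_base_neg q a b : 0 <= q -> 0 < a <= b -> Rpower b (- q) <= Rpower a (- q).
Proof.
  intros Hq Hab. rewrite !Rpower_Ropp.
  apply Rinv_le_contravar; [apply Rp_pos|]. apply Rle_Rpower_l; lra.
Qed.

Lemma Rp_le_exp s p p' : 1 <= s -> p <= p' -> Rpower s p <= Rpower s p'.
Proof.
  intros Hs Hp. unfold Rpower. 
  assert (0 <= ln s). { destruct (Req_dec s 1). subst; rewrite ln_1; lra.
    left. rewrite <- ln_1. apply ln_increasing; lra. }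
  destruct (Rle_lt_or_eq_dec _ _ (Rmult_le_compat_r _ _ _ H Hp)) as [h|h].
  - left; apply exp_increasing; auto.
  - rewrite h; lra.
Qed.

Lemma Rp_le1 x p : 0 < x <= 1 -> 0 <= p -> Rpower x p <= 1.
Proof.
  intros Hx Hp. unfold Rpower. rewrite <- exp_0.
  assert (ln x <= 0). { destruct (Req_dec x 1). subst; rewrite ln_1; lra.
    left. rewrite <- ln_1. apply ln_increasing; lra. }
  destruct (Rle_lt_or_eq_dec (p * ln x) 0) as [h|h].
  - rewrite <- (Rmult_0_r p). apply Rmult_le_compat_l; lra.
  - left; apply exp_increasing; auto.
  - rewrite h; lra.
Qed.

Lemma Rp_bern p s : 0 < p -> 1 <= s -> 1 - p * (s - 1) <= Rpower s (- p).
Proof.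
  intros Hp Hs. destruct (Req_dec s 1) as [->|Hne].
  - unfold Rpower; rewrite ln_1, Rmult_0_r, exp_0. lra.
  - destruct (Rp_mvt p 1 s) as [xi [Hxi Heq]]; try lra.
    replace (Rpower 1 (-p)) with 1 in Heq by (unfold Rpower; rewrite ln_1, Rmult_0_r, exp_0; auto).
    assert (Rpower xi (-p-1) <= 1).
    { replace (-p-1) with (-(p+1)) by ring. rewrite Rpower_Ropp.
      assert (1 <= Rpower xi (p+1)).
      { apply Rle_trans with (Rpower xi 0). rewrite Rpower_O; lra. apply Rp_le_exp; lra. }
      apply Rle_trans with (/1). apply Rinv_le_contravar; lra. rewrite Rinv_1; lra. }
    assert (0 < Rpower xi (-p-1)) by apply Rp_pos.
    assert (p * Rpower xi (- p - 1) * (s - 1) <= p * 1 * (s-1)).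
    { apply Rmult_le_compat_r; [lra|]. apply Rmult_le_compat_l; lra. }
    lra.
Qed.

Lemma step_ineq al C0 m y : 0 < al < 1 -> 0 < C0 -> C0/2 <= m <= C0 -> 0 < y <= 1 ->
  let t := m * Rpower y al in
  let D := Rpower y (- al) - Rpower (y * (1 + t)) (- al) in
  D <= al * m /\ al * m - al * (al+1) * C0^2 * Rpower y al <= D /\
  al * (C0/2) * Rpower (1 + C0) (- (2)) <= D.
Proof.
  intros Hal HC0 Hm Hy t D.
  set (v := Rpower y al).
  assert (Hv : 0 < v) by apply Rp_pos.
  assert (Hv1 : v <= 1) by (apply Rp_le1; lra).
  assert (Ht : 0 < t) by (unfold t; fold v; nra).
  assert (HtC : t <= C0) by (unfold t; fold v; nra).
  destruct (Rp_mvt al 1 (1+t)) as [xi [Hxi Heq]]; try lra.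
  replace (Rpower 1 (-al)) with 1 in Heq by (unfold Rpower; rewrite ln_1, Rmult_0_r, exp_0; auto).
  assert (HD : D = (1 - Rpower (1+t) (-al)) / v).
  { unfold D. rewrite <- Rpower_mult_distr by lra.
    rewrite Rpower_Ropp. unfold v. field; try split; apply Rgt_not_eq, Rp_pos. }
  assert (Hg : 1 - Rpower (1+t) (-al) = al * t * Rpower xi (-al-1)) by (lra).
  set (r := Rpower xi (-al-1)) in *.
  assert (Hr1 : r <= 1).
  { unfold r. replace (-al-1) with (-(al+1)) by ring. rewrite Rpower_Ropp.
    assert (1 <= Rpower xi (al+1)).
    { apply Rle_trans with (Rpower xi 0). rewrite Rpower_O; lra. apply Rp_le_exp; lra. }
    apply Rle_trans with (/1). apply Rinv_le_contravar; lra. rewrite Rinv_1; lra. }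
  assert (Hr2 : Rpower (1+t) (-al-1) <= r).
  { unfold r. replace (-al-1) with (-(al+1)) by ring. apply Rp_le_base_neg; lra. }
  assert (Hr3 : 1 - (al+1) * t <= Rpower (1+t) (-al-1)).
  { replace (-al-1) with (-(al+1)) by ring. 
    pose proof (Rp_bern (al+1) (1+t)) as HB. replace (1+t-1) with t in HB by ring.
    apply HB; lra. }
  assert (Hr4 : Rpower (1+C0) (- (2)) <= Rpower (1+t) (-al-1)).
  { apply Rle_trans with (Rpower (1+t) (- (2))).
    - apply Rp_le_base_neg; lra.
    - apply Rp_le_exp; lra. }
  assert (Hg0 : 0 < Rpower (1+C0) (- (2))) by apply Rp_pos.
  assert (Hr5: 1 - (al+1)*t <= r) by lra.
  assert (Hr6: Rpower (1 + C0) (- (2)) <= r) by lra.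
  rewrite HD, Hg. unfold t in Hr5 |- *. fold v in Hr5 |- *.
  replace (al * (m * v) * r / v) with (al * m * r) by (field; lra).
  split; [|split].
  - assert (al * m * r <= al * m * 1) by (apply Rmult_le_compat_l; [nra|lra]). lra.
  - assert (al * m * (1 - (al+1) * (m*v)) <= al * m * r).
    { apply Rmult_le_compat_l; [nra|]. lra. }
    assert (al * (al+1) * m^2 * v <= al * (al+1) * C0^2 * v).
    { apply Rmult_le_compat_r; [lra|]. apply Rmult_le_compat_l; [nra|].
      apply pow_incr; lra. }
    nra.
  - assert (al * (C0/2) * Rpower (1 + C0) (- (2)) <= al * m * Rpower (1 + C0) (- (2))) by
      (apply Rmult_le_compat_r; nra).
    assert (al * m * Rpower (1 + C0) (- (2)) <= al * m * r) by (apply Rmult_le_compat_l; nra).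
    lra.
Qed.

Definition G (al c1 C0 : R) (l : nat) (y : R) : R :=
  y * (1 + C0 * Rpower 2 (- (- (ln y / c1) - INR l)) * Rpower y al).

Lemma ln_cont a : 0 < a -> continuity_pt ln a.
Proof. intros Ha. apply derivable_continuous_pt. exists (/a). apply derivable_pt_lim_ln; auto. Qed.

Lemma exp_cont a : continuity_pt exp a.
Proof. apply derivable_continuous_pt. exists (exp a). apply derivable_pt_lim_exp. Qed.

Module CQ.
From Coquelicot Require Import Coquelicot.
Lemma G_cont al c1 C0 l a : 0 < a -> continuity_pt (G al c1 C0 l) a.
Proof.
  intros Ha. apply continuity_pt_filterlim.
  apply (@ex_derive_continuous R_AbsRing R_NormedModule).
  unfold G, Rpower. auto_derive. repeat split; auto.
Qed.
End CQ.
Definition G_cont := CQ.G_cont.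


Lemma ln_s c1 l : ln (s_pt c1 l) = - INR l * c1.
Proof. unfold s_pt. apply ln_exp. Qed.

Lemma s_pos c1 l : 0 < s_pt c1 l.
Proof. unfold s_pt. apply exp_pos. Qed.

Lemma s_decr c1 l : 0 < c1 -> s_pt c1 (S l) < s_pt c1 l.
Proof. intros H. unfold s_pt. apply exp_increasing. rewrite S_INR. nra. Qed.

Lemma s_le1 c1 l : 0 < c1 -> s_pt c1 l <= 1.
Proof. intros H. unfold s_pt. rewrite <- exp_0. 
  destruct (Req_dec (- INR l * c1) 0) as [e|e]. rewrite e; lra.
  left. apply exp_increasing. pose proof (pos_INR l). nra. Qed.

Lemma Rp_split y al K : 0 < y -> y * (1 + K * Rpower y al) = y + K * Rpower y (1 + al).
Proof. intros Hy. rewrite Rpower_plus, Rpower_1 by auto. ring. Qed.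

Lemma Rp2m1 : Rpower 2 (-1) = / 2.
Proof. replace (-1) with (- (1)) by ring. rewrite Rpower_Ropp, Rpower_1; lra. Qed.

Lemma G_low al c1 C0 l : 0 < c1 -> G al c1 C0 l (s_pt c1 (S l)) = f_minus al c1 C0 (S l).
Proof.
  intros Hc. unfold G, f_minus. rewrite ln_s.
  replace (- (- (- INR (S l) * c1 / c1) - INR l)) with (-1) by (rewrite S_INR; field; lra).
  rewrite Rp2m1. rewrite <- Rp_split by apply s_pos. reflexivity.
Qed.

Lemma G_high al c1 C0 l : 0 < c1 -> G al c1 C0 l (s_pt c1 l) = f_plus al c1 C0 l.
Proof.
  intros Hc. unfold G, f_plus. rewrite ln_s.
  replace (- (- (- INR l * c1 / c1) - INR l)) with 0 by (field; lra).
  rewrite Rpower_O by lra. rewrite <- Rp_split by apply s_pos. f_equal. ring.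
Qed.

Lemma ln_le_mono a b : 0 < a -> a <= b -> ln a <= ln b.
Proof. intros Ha Hab. destruct (Req_dec a b). subst; lra. left; apply ln_increasing; lra. Qed.

Lemma fM1_G al c1 C0 l y : 0 < c1 -> s_pt c1 (S l) < y <= s_pt c1 l -> y <= 1/2 ->
  fM1 al c1 C0 y = G al c1 C0 l y.
Proof.
  intros Hc Hy Hy2. pose proof (s_pos c1 (S l)).
  unfold fM1, G, M1, fracs.
  destruct (Rle_dec y (1/2)) as [_|n]; [|lra].
  assert (Hl1 : ln y <= - INR l * c1) by (rewrite <- ln_s; apply ln_le_mono; lra).
  assert (Hl2 : - INR (S l) * c1 < ln y) by (rewrite <- ln_s; apply ln_increasing; lra).
  rewrite S_INR in Hl2.
  assert (Hneg : ln y / c1 < 0).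
  { unfold Rdiv. apply Rmult_neg_pos; [|apply Rinv_0_lt_compat; auto].
    rewrite <- ln_1. apply ln_increasing; lra. }
  destruct (Rlt_dec (ln y / c1) 0) as [_|n]; [|lra].
  unfold frac_part. rewrite <- (Int_part_spec _ (Z.of_nat l)).
  - rewrite <- INR_IZR_INZ. reflexivity.
  - rewrite <- INR_IZR_INZ. split.
    + apply Rmult_lt_reg_r with c1; auto. 
      replace ((- (ln y / c1) - 1) * c1) with (- ln y - c1) by (field; lra). nra.
    + apply Rmult_le_reg_r with c1; auto.
      replace (- (ln y / c1) * c1) with (- ln y) by (field; lra). nra.
Qed.

Lemma G_gt al c1 C0 l y : 0 < C0 -> 0 < y -> y < G al c1 C0 l y.
Proof.
  intros HC Hy. unfold G. pose proof (Rp_pos 2 (- (- (ln y / c1) - INR l))).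
  pose proof (Rp_pos y al).
  assert (0 < C0 * Rpower 2 (- (- (ln y / c1) - INR l)) * Rpower y al) by
    (apply Rmult_lt_0_compat; [apply Rmult_lt_0_compat|]; auto).
  nra.
Qed.

Lemma piece_ivt al c1 C0 l a x : 0 < c1 -> s_pt c1 (S l) < a ->
  f_minus al c1 C0 (S l) < x <= G al c1 C0 l a ->
  exists y, s_pt c1 (S l) < y <= a /\ G al c1 C0 l y = x.
Proof.
  intros Hc Ha [Hx1 Hx2]. pose proof (s_pos c1 (S l)).
  destruct (Req_dec x (G al c1 C0 l a)) as [e|ne].
  - exists a; split; [lra|auto].
  - destruct (IVT_interv (fun y => G al c1 C0 l y - x) (s_pt c1 (S l)) a) as [z [Hz1 Hz2]].
    + intros b Hb. change (continuity_pt (minus_fct (G al c1 C0 l) (fct_cte x)) b).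
      apply continuity_pt_minus; [apply G_cont; lra|apply continuity_pt_const; intros ? ?; auto].
    + auto.
    + rewrite G_low by auto. lra.
    + lra.
    + exists z. assert (z <> s_pt c1 (S l)).
      { intro e. rewrite e, G_low in Hz2 by auto. lra. }
      split; lra.
Qed.

Lemma C0_pos al c1 C0 : 0 < al < 1 ->
  limit1_in (fM1 al c1 C0) (fun x => 0 <= x < 1/2) 1 (1/2) ->
  0 < C0 /\ exists y0, 0 < y0 < 1/2 /\ 1/2 < fM1 al c1 C0 y0.
Proof.
  intros Hal H. destruct (H (1/2)) as [alp [Halp Hd]]; [lra|].
  set (y := 1/2 - Rmin alp (1/2) / 2).
  assert (Hmin1 : Rmin alp (1/2) <= alp) by apply Rmin_l.
  assert (Hmin2 : Rmin alp (1/2) <= 1/2) by apply Rmin_r.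
  assert (Hmin3 : 0 < Rmin alp (1/2)) by (apply Rmin_pos; lra).
  specialize (Hd y). simpl in Hd. unfold R_dist in Hd.
  assert (Hf : Rabs (fM1 al c1 C0 y - 1) < 1/2).
  { apply Hd. split. unfold y; split; lra. unfold y. rewrite Rabs_left; lra. }
  apply Rabs_def2 in Hf.
  assert (Hy0 : 0 < y).
  { destruct (Req_dec y 0) as [e|e]; [|unfold y in *; lra].
    exfalso. unfold fM1 in Hf. destruct (Rle_dec y (1/2)); rewrite e in Hf; lra. }
  split.
  - destruct (Rlt_or_le 0 C0) as [h|h]; auto. exfalso.
    unfold fM1 in Hf. destruct (Rle_dec y (1/2)) as [_|n]; [|unfold y in n; lra].
    unfold M1 in Hf. pose proof (Rp_pos 2 (- fracs (ln y / c1))). pose proof (Rp_pos y al).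
    assert (C0 * Rpower 2 (- fracs (ln y / c1)) * Rpower y al <= 0).
    { rewrite Rmult_assoc. assert (0 < Rpower 2 (- fracs (ln y / c1)) * Rpower y al) by (apply Rmult_lt_0_compat; auto). nra. }
    assert (y * (C0 * Rpower 2 (- fracs (ln y / c1)) * Rpower y al) <= 0).
    { nra. }
    unfold y in *; nra.
  - exists y. split; [unfold y; lra|lra].
Qed.

Lemma fracs_range y : 0 <= fracs y < 1.
Proof. unfold fracs. destruct (Rlt_dec y 0); pose proof (base_fp (-y)); pose proof (base_fp y); lra. Qed.

Lemma M1_bounds c1 C0 y : 0 < C0 -> C0 / 2 <= M1 c1 C0 y <= C0.
Proof.
  intros HC. unfold M1. pose proof (fracs_range (ln y / c1)).
  assert (Rpower 2 (-1) <= Rpower 2 (- fracs (ln y / c1))) by (apply Rp_le_exp; lra).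
  assert (Rpower 2 (- fracs (ln y / c1)) <= Rpower 2 0) by (apply Rp_le_exp; lra).
  rewrite Rp2m1 in *. rewrite Rpower_O in * by lra. nra.
Qed.

Lemma s_small c1 eps : 0 < c1 -> 0 < eps -> exists N, s_pt c1 N < eps.
Proof.
  intros Hc He. destruct (INR_unbounded (- ln eps / c1)) as [N HN]. exists N.
  unfold s_pt. rewrite <- (exp_ln eps) by auto. apply exp_increasing.
  apply Rmult_lt_reg_r with (/c1); [apply Rinv_0_lt_compat; auto|].
  replace (- INR N * c1 * / c1) with (- INR N) by (field; lra). unfold Rdiv in HN. lra.
Qed.

Lemma s_mono c1 n m : 0 < c1 -> (n <= m)%nat -> s_pt c1 m <= s_pt c1 n.
Proof.
  intros Hc Hnm. unfold s_pt. apply le_INR in Hnm.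
  destruct (Req_dec (INR n) (INR m)) as [e|e]. rewrite e; lra.
  left. apply exp_increasing. nra.
Qed.

Lemma exists_piece c1 y : 0 < c1 -> 0 < y <= 1 -> exists l, s_pt c1 (S l) < y <= s_pt c1 l.
Proof.
  intros Hc Hy. destruct (s_small c1 y Hc) as [N HN]; [lra|].
  revert HN. induction N as [|N IH]; intros HN.
  - replace (s_pt c1 0) with 1 in HN by (unfold s_pt; simpl; rewrite <- exp_0; f_equal; ring). lra.
  - destruct (Rlt_or_le (s_pt c1 N) y) as [h|h]; auto. exists N; auto.
Qed.

Lemma fminus_le al c1 C0 n : 0 < al -> 0 < c1 -> 0 < C0 -> f_minus al c1 C0 n <= (1 + C0/2) * s_pt c1 n.
Proof.
  intros Hal Hc HC. unfold f_minus. pose proof (s_pos c1 n). pose proof (s_le1 c1 n Hc).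
  rewrite Rpower_plus, Rpower_1 by auto.
  assert (Rpower (s_pt c1 n) al <= 1) by (apply Rp_le1; lra).
  pose proof (Rp_pos (s_pt c1 n) al).
  assert (s_pt c1 n * Rpower (s_pt c1 n) al <= s_pt c1 n) by nra.
  assert (C0 / 2 * (s_pt c1 n * Rpower (s_pt c1 n) al) <= C0/2 * s_pt c1 n) by
    (apply Rmult_le_compat_l; lra).
  lra.
Qed.

Definition NP al c1 C0 x y :=
    (exists l : nat, (1 <= l)%nat /\
        f_minus al c1 C0 l <= x <= f_plus al c1 C0 l /\ y = s_pt c1 l)
    \/ (~ in_jump al c1 C0 x /\ 0 < y < x /\ fM1 al c1 C0 y = x).

Lemma fminus_le_fplus al c1 C0 l : 0 < C0 -> f_minus al c1 C0 l <= f_plus al c1 C0 l.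
Proof. intros HC. unfold f_minus, f_plus. pose proof (Rp_pos (s_pt c1 l) (1 + al)). nra. Qed.

Lemma NP_sat al c1 C0 x : 0 < al < 1 -> 0 < c1 ->
  limit1_in (fM1 al c1 C0) (fun x => 0 <= x < 1/2) 1 (1/2) ->
  0 < x <= 1/2 -> exists y, NP al c1 C0 x y.
Proof.
  intros Hal Hc Hlim Hx.
  destruct (C0_pos al c1 C0 Hal Hlim) as [HC [y0 [Hy0 Hfy0]]].
  destruct (exists_piece c1 y0 Hc) as [l0 [Hl0a Hl0b]]; [lra|].
  assert (HG0 : fM1 al c1 C0 y0 = G al c1 C0 l0 y0) by (apply fM1_G; auto; lra).
  assert (Hjump : forall x, in_jump al c1 C0 x -> exists y, NP al c1 C0 x y).
  { intros x' [l [Hl1 [Hl2 Hl3]]]. exists (s_pt c1 l). left. exists l. auto. }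
  assert (Hind : forall k x, 0 < x <= 1/2 -> f_minus al c1 C0 (S (l0 + k)) < x ->
              exists y, NP al c1 C0 x y).
  { induction k as [|k IH]; intros x' Hx' Hm.
    - destruct (Classical_Prop.classic (in_jump al c1 C0 x')) as [J|J]; [apply Hjump; auto|].
      rewrite Nat.add_0_r in Hm.
      destruct (piece_ivt al c1 C0 l0 y0 x' Hc Hl0a) as [y [Hy1 Hy2]]; [lra|].
      pose proof (G_gt al c1 C0 l0 y HC ltac:(pose proof (s_pos c1 (S l0)); lra)).
      exists y. right. split; auto. pose proof (s_pos c1 (S l0)). split; [lra|].
      rewrite <- Hy2. apply fM1_G; auto; lra.
    - destruct (Rlt_or_le (f_minus al c1 C0 (S (l0 + k))) x') as [h|h]; [apply IH; auto|].
      destruct (Classical_Prop.classic (in_jump al c1 C0 x')) as [J|J]; [apply Hjump; auto|].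
      set (l := S (l0 + k)) in *.
      replace (S (l0 + S k)) with (S l) in Hm by (unfold l; lia).
      pose proof (fminus_le_fplus al c1 C0 l HC).
      destruct (piece_ivt al c1 C0 l (s_pt c1 l) x' Hc (s_decr c1 l Hc)) as [y [Hy1 Hy2]].
      { rewrite G_high by auto. lra. }
      pose proof (G_gt al c1 C0 l y HC ltac:(pose proof (s_pos c1 (S l)); lra)).
      exists y. right. split; auto. pose proof (s_pos c1 (S l)). split; [lra|].
      rewrite <- Hy2. apply fM1_G; auto; lra. }
  destruct (s_small c1 (x / (1 + C0/2)) Hc) as [N HN].
  { apply Rdiv_lt_0_compat; lra. }
  apply (Hind N x Hx).
  pose proof (fminus_le al c1 C0 (S (l0 + N)) ltac:(lra) Hc HC).
  pose proof (s_mono c1 N (S (l0 + N)) Hc ltac:(lia)).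
  apply Rmult_lt_compat_l with (r := 1 + C0/2) in HN; [|lra].
  replace ((1 + C0 / 2) * (x / (1 + C0 / 2))) with x in HN by (field; lra).
  nra.
Qed.

Lemma next_spec al c1 C0 x : 0 < al < 1 -> 0 < c1 ->
  limit1_in (fM1 al c1 C0) (fun x => 0 <= x < 1/2) 1 (1/2) ->
  0 < x <= 1/2 ->
  let y := next_pt al c1 C0 x in
  0 < y < x /\
  C0/2 <= (x - y) / (y * Rpower y al) <= C0 /\
  ((x - y) / (y * Rpower y al) = M1 c1 C0 y \/ exists l, (1 <= l)%nat /\ y = s_pt c1 l).
Proof.
  intros Hal Hc Hlim Hx y.
  destruct (C0_pos al c1 C0 Hal Hlim) as [HC _].
  assert (H : NP al c1 C0 x y).
  { unfold y, next_pt. apply (epsilon_spec (inhabits 0) (NP al c1 C0 x)).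
    apply NP_sat; auto. }
  destruct H as [[l [Hl1 [[Hl2 Hl3] Hl4]]] | [Hnj [Hy Hf]]].
  - rewrite Hl4. pose proof (s_pos c1 l) as Hs. pose proof (Rp_pos (s_pt c1 l) al) as Hp.
    unfold f_minus, f_plus in *. rewrite Rpower_plus, Rpower_1 in * by auto.
    assert (Hsp : 0 < s_pt c1 l * Rpower (s_pt c1 l) al) by (apply Rmult_lt_0_compat; auto).
    assert (E : (x - s_pt c1 l) / (s_pt c1 l * Rpower (s_pt c1 l) al) *
              (s_pt c1 l * Rpower (s_pt c1 l) al) = x - s_pt c1 l) by (field; lra).
    split; [|split].
    + split; auto. nra.
    + split.
      * apply Rmult_le_reg_r with (s_pt c1 l * Rpower (s_pt c1 l) al); auto.
        rewrite E. lra.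
      * apply Rmult_le_reg_r with (s_pt c1 l * Rpower (s_pt c1 l) al); auto.
        rewrite E. lra.
    + right. exists l; auto.
  - assert (Hf' : x = y * (1 + M1 c1 C0 y * Rpower y al)).
    { rewrite <- Hf. unfold fM1. destruct (Rle_dec y (1/2)); auto; lra. }
    assert (Hm : (x - y) / (y * Rpower y al) = M1 c1 C0 y).
    { rewrite Hf'. field. split; [apply Rgt_not_eq, Rp_pos|lra]. }
    rewrite Hm. split; auto. split; [apply M1_bounds; auto|left; auto].
Qed.

Lemma xseq_range al c1 C0 n : 0 < al < 1 -> 0 < c1 ->
  limit1_in (fM1 al c1 C0) (fun x => 0 <= x < 1/2) 1 (1/2) ->
  0 < xseq al c1 C0 n <= 1/2.
Proof.
  intros Hal Hc Hlim. induction n as [|n IH]; simpl; [lra|].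
  destruct (next_spec al c1 C0 (xseq al c1 C0 n) Hal Hc Hlim IH) as [H _]. lra.
Qed.

Definition Pot c1 x := IZR (up (- ln x / c1)).

Lemma up_mono r1 r2 : r1 <= r2 -> IZR (up r1) <= IZR (up r2).
Proof.
  intros H. destruct (archimed r1) as [a1 b1]. destruct (archimed r2) as [a2 b2].
  destruct (Z.le_gt_cases (up r1) (up r2)) as [h|h]. apply IZR_le; auto.
  exfalso. assert (up r1 >= up r2 + 1)%Z by lia. apply Z.ge_le in H0. apply IZR_le in H0.
  rewrite plus_IZR in H0. lra.
Qed.

Lemma up_jump r l : r < INR l -> IZR (up r) + 1 <= IZR (up (INR l)).
Proof.
  intros H. rewrite <- (tech_up (INR l) (Z.of_nat l + 1)).
  - destruct (archimed r) as [a b]. 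
    assert (IZR (up r) < IZR (Z.of_nat l + 1)) by (rewrite plus_IZR, <- INR_IZR_INZ; lra).
    apply lt_IZR in H0. assert (up r + 1 <= Z.of_nat l + 1)%Z by lia.
    apply IZR_le in H1. rewrite plus_IZR in H1. lra.
  - rewrite plus_IZR, <- INR_IZR_INZ; lra.
  - rewrite plus_IZR, <- INR_IZR_INZ; lra.
Qed.

Lemma Pot_mono c1 x y : 0 < c1 -> 0 < y -> y <= x -> Pot c1 x <= Pot c1 y.
Proof.
  intros Hc Hy Hxy. unfold Pot. apply up_mono.
  apply Rmult_le_reg_r with c1; auto. unfold Rdiv. rewrite !Rmult_assoc, Rinv_l by lra.
  pose proof (ln_le_mono y x Hy Hxy). lra.
Qed.

Lemma Pot_jump c1 x l : 0 < c1 -> s_pt c1 l < x -> Pot c1 x + 1 <= Pot c1 (s_pt c1 l).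
Proof.
  intros Hc Hx. unfold Pot. rewrite ln_s.
  replace (- (- INR l * c1) / c1) with (INR l) by (field; lra).
  apply up_jump. pose proof (s_pos c1 l).
  assert (ln (s_pt c1 l) < ln x) by (apply ln_increasing; auto). rewrite ln_s in H0.
  apply Rmult_lt_reg_r with c1; auto. unfold Rdiv. rewrite !Rmult_assoc, Rinv_l by lra. lra.
Qed.

Lemma step_main al c1 C0 j : 0 < al < 1 -> 0 < c1 ->
  limit1_in (fM1 al c1 C0) (fun x => 0 <= x < 1/2) 1 (1/2) ->
  let x := xseq al c1 C0 j in let y := xseq al c1 C0 (S j) in
  let D := Rpower y (- al) - Rpower x (- al) in
  Rabs (D - al * M1 c1 C0 y) <= al * C0 / 2 * (Pot c1 y - Pot c1 x)
                               + al * (al + 1) * C0 ^ 2 * Rpower y al /\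
  al * (C0/2) * Rpower (1 + C0) (- (2)) <= D /\ D <= al * C0 /\
  Pot c1 x <= Pot c1 y.
Proof.
  intros Hal Hc Hlim x y D.
  destruct (C0_pos al c1 C0 Hal Hlim) as [HC _].
  pose proof (xseq_range al c1 C0 j Hal Hc Hlim) as Hx. fold x in Hx.
  destruct (next_spec al c1 C0 x Hal Hc Hlim Hx) as [Hy [Hm Hcase]].
  change (next_pt al c1 C0 x) with y in Hy, Hm, Hcase.
  set (m := (x - y) / (y * Rpower y al)) in *.
  assert (Hxe : x = y * (1 + m * Rpower y al)).
  { unfold m. field. split; [apply Rgt_not_eq, Rp_pos|lra]. }
  destruct (step_ineq al C0 m y Hal HC Hm ltac:(lra)) as [S1 [S2 S3]].
  rewrite <- Hxe in S1, S2, S3. fold D in S1, S2, S3.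
  assert (HP : Pot c1 x <= Pot c1 y) by (apply Pot_mono; lra).
  assert (HM : C0/2 <= M1 c1 C0 y <= C0) by (apply M1_bounds; auto).
  assert (He : Rabs (m - M1 c1 C0 y) <= C0/2 * (Pot c1 y - Pot c1 x)).
  { destruct Hcase as [e|[l [Hl Hyl]]].
    - rewrite e, Rminus_diag, Rabs_R0. nra.
    - assert (Pot c1 x + 1 <= Pot c1 y) by (rewrite Hyl; apply Pot_jump; auto; lra).
      apply Rabs_le. nra. }
  pose proof (Rp_pos y al).
  assert (He2 : Rabs (D - al * M1 c1 C0 y) <= Rabs (D - al * m) + al * Rabs (m - M1 c1 C0 y)).
  { replace (D - al * M1 c1 C0 y) with ((D - al * m) + al * (m - M1 c1 C0 y)) by ring.
    eapply Rle_trans; [apply Rabs_triang|]. rewrite Rabs_mult, (Rabs_pos_eq al) by lra. lra. }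
  assert (He3 : Rabs (D - al * m) <= al * (al + 1) * C0 ^ 2 * Rpower y al).
  { apply Rabs_le. split; lra. }
  split; [|split; [lra|split; [nra|auto]]].
  assert (al * Rabs (m - M1 c1 C0 y) <= al * (C0 / 2 * (Pot c1 y - Pot c1 x))) by
    (apply Rmult_le_compat_l; lra).
  lra.
Qed.

Definition U al c1 C0 n := Rpower (xseq al c1 C0 n) (- al).
Definition Asum al c1 C0 m := sum_f_R0 (fun j => M1 c1 C0 (xseq al c1 C0 (S j))) m.
Definition Vsum al c1 C0 m := sum_f_R0 (fun j => Rpower (xseq al c1 C0 (S j)) al) m.
Definition dl al C0 := al * (C0/2) * Rpower (1 + C0) (- (2)).

Lemma U_bounds al c1 C0 n : 0 < al < 1 -> 0 < c1 ->
  limit1_in (fM1 al c1 C0) (fun x => 0 <= x < 1/2) 1 (1/2) ->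
  U al c1 C0 0 + dl al C0 * INR n <= U al c1 C0 n <= U al c1 C0 0 + al * C0 * INR n.
Proof.
  intros Hal Hc Hlim. induction n as [|n IH].
  - simpl. lra.
  - destruct (step_main al c1 C0 n Hal Hc Hlim) as [_ [S2 [S3 _]]].
    unfold U in *. rewrite S_INR. unfold dl in *. lra.
Qed.

Lemma sum_main al c1 C0 m : 0 < al < 1 -> 0 < c1 ->
  limit1_in (fM1 al c1 C0) (fun x => 0 <= x < 1/2) 1 (1/2) ->
  Rabs (U al c1 C0 (S m) - U al c1 C0 0 - al * Asum al c1 C0 m) <=
    al * C0 / 2 * (Pot c1 (xseq al c1 C0 (S m)) - Pot c1 (xseq al c1 C0 0))
    + al * (al + 1) * C0 ^ 2 * Vsum al c1 C0 m.
Proof.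
  intros Hal Hc Hlim. induction m as [|m IH].
  - destruct (step_main al c1 C0 0 Hal Hc Hlim) as [S1 _].
    unfold U, Asum, Vsum. cbn [sum_f_R0]. exact S1.
  - destruct (step_main al c1 C0 (S m) Hal Hc Hlim) as [S1 [_ [_ S4]]].
    unfold Asum, Vsum in *. cbn [sum_f_R0]. unfold U in *.
    set (a := Rpower (xseq al c1 C0 (S (S m))) (- al)) in *.
    set (b := Rpower (xseq al c1 C0 (S m)) (- al)) in *.
    set (c := Rpower (xseq al c1 C0 0) (- al)) in *.
    replace (a - c - al * (sum_f_R0 (fun j : nat => M1 c1 C0 (xseq al c1 C0 (S j))) m +
       M1 c1 C0 (xseq al c1 C0 (S (S m)))))
      with ((b - c - al * sum_f_R0 (fun j : nat => M1 c1 C0 (xseq al c1 C0 (S j))) m)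
            + (a - b - al * M1 c1 C0 (xseq al c1 C0 (S (S m))))) by ring.
    eapply Rle_trans; [apply Rabs_triang|]. lra.
Qed.

Lemma Asum_lower al c1 C0 m : 0 < C0 -> C0 / 2 * INR (S m) <= Asum al c1 C0 m.
Proof.
  intros HC. unfold Asum. induction m as [|m IH].
  - cbn [sum_f_R0]. change (INR 1) with 1. pose proof (M1_bounds c1 C0 (xseq al c1 C0 1) HC). lra.
  - cbn [sum_f_R0]. rewrite S_INR. pose proof (M1_bounds c1 C0 (xseq al c1 C0 (S (S m))) HC). lra.
Qed.

Lemma ln_ge z : 0 < z -> 1 - / z <= ln z.
Proof.
  intros Hz. pose proof (exp_ineq1_le (- ln z)). rewrite exp_Ropp, exp_ln in H by auto. lra.
Qed.

Lemma harm m : sum_f_R0 (fun j => / INR (S j)) m <= 1 + ln (INR (S m)).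
Proof.
  induction m as [|m IH].
  - simpl. rewrite ln_1. lra.
  - cbn [sum_f_R0].
    assert (/ INR (S (S m)) <= ln (INR (S (S m))) - ln (INR (S m))).
    { pose proof (lt_0_INR (S m) ltac:(lia)). 
      rewrite (S_INR (S m)).
      replace (ln (INR (S m) + 1) - ln (INR (S m))) with (ln ((INR (S m) + 1) / INR (S m)))
        by (unfold Rdiv; rewrite ln_mult, ln_Rinv; try apply Rinv_0_lt_compat; lra).
      eapply Rle_trans; [|apply ln_ge; apply Rdiv_lt_0_compat; lra].
      replace (1 - / ((INR (S m) + 1) / INR (S m))) with (/ (INR (S m) + 1)) by (field; lra).
      lra. }
    lra.
Qed.

Lemma Vsum_bound al c1 C0 m : 0 < al < 1 -> 0 < c1 ->
  limit1_in (fM1 al c1 C0) (fun x => 0 <= x < 1/2) 1 (1/2) ->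
  Vsum al c1 C0 m <= / dl al C0 * (1 + ln (INR (S m))).
Proof.
  intros Hal Hc Hlim. destruct (C0_pos al c1 C0 Hal Hlim) as [HC _].
  assert (Hd : 0 < dl al C0).
  { unfold dl. pose proof (Rp_pos (1 + C0) (- (2))). apply Rmult_lt_0_compat; [|auto]. nra. }
  assert (HU0 : 0 < U al c1 C0 0) by apply Rp_pos.
  apply Rle_trans with (sum_f_R0 (fun j => / dl al C0 * / INR (S j)) m).
  - unfold Vsum. apply sum_Rle. intros j _.
    destruct (U_bounds al c1 C0 (S j) Hal Hc Hlim) as [L _].
    unfold U in L, HU0. rewrite !Rpower_Ropp in L. rewrite Rpower_Ropp in HU0.
    pose proof (Rp_pos (xseq al c1 C0 (S j)) al).
    pose proof (lt_0_INR (S j) ltac:(lia)).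
    rewrite <- Rinv_mult. rewrite <- (Rinv_inv (Rpower (xseq al c1 C0 (S j)) al)).
    apply Rinv_le_contravar; [apply Rmult_lt_0_compat; auto|].
    lra.
  - rewrite (sum_eq _ (fun j => / INR (S j) * / dl al C0)) by (intros; ring).
    rewrite <- scal_sum. apply Rmult_le_compat_l.
    + left; apply Rinv_0_lt_compat; auto.
    + apply harm.
Qed.

Lemma mvt_abs q a b c : 0 < q -> 0 < c -> c <= a -> c <= b ->
  Rabs (Rpower b (- q) - Rpower a (- q)) <= q * Rpower c (- q - 1) * Rabs (b - a).
Proof.
  intros Hq Hc Ha Hb.
  assert (key : forall a b, c <= a -> a < b ->
     Rabs (Rpower b (- q) - Rpower a (- q)) <= q * Rpower c (- q - 1) * Rabs (b - a)).
  { clear a b Ha Hb. intros a b Ha Hab.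
    destruct (Rp_mvt q a b ltac:(lra) Hab) as [xi [Hxi E]]. rewrite E.
    rewrite Rabs_mult, Rabs_mult, Rabs_Ropp, (Rabs_pos_eq q), (Rabs_pos_eq (Rpower xi _)) by
      (try left; try apply Rp_pos; lra).
    apply Rmult_le_compat_r; [apply Rabs_pos|]. apply Rmult_le_compat_l; [lra|].
    replace (-q-1) with (-(q+1)) by ring. apply Rp_le_base_neg; lra. }
  destruct (Rtotal_order a b) as [h|[h|h]].
  - apply key; auto.
  - subst. rewrite !Rminus_diag, Rabs_R0. pose proof (Rp_pos c (-q-1)). nra.
  - rewrite Rabs_minus_sym, (Rabs_minus_sym b a). apply key; auto.
Qed.

Lemma Rp_inv_inv x al : 0 < x -> 0 < al -> Rpower (Rpower x (- al)) (- (1 / al)) = x.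
Proof. intros Hx Hal. rewrite Rpower_mult. replace (- al * - (1 / al)) with 1 by (field; lra).
  apply Rpower_1; auto. Qed.

Lemma ln3 : 1 <= ln 3.
Proof. rewrite <- (ln_exp 1). apply ln_le_mono; [apply exp_pos|apply exp_le_3]. Qed.

Theorem proposition4p1 (alpha c1 C0 : R)
  (Halpha : 0 < alpha < 1) (Hc1 : 0 < c1)
  (HC0 : limit1_in (fM1 alpha c1 C0) (fun x => 0 <= x < 1/2) 1 (1/2)) :
  exists K : R, exists N : nat, forall n : nat, (N <= n)%nat ->
    Rabs (xseq alpha c1 C0 n
          - / Rpower (alpha * M0 alpha c1 C0 n * INR n) (1 / alpha))
    <= K * (ln (INR n) / Rpower (INR n) (1 + 1 / alpha)).
Proof.
  set (al := alpha) in *.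
  destruct (C0_pos al c1 C0 Halpha HC0) as [HC _].
  set (q := 1 / al).
  assert (Hq : 0 < q) by (unfold q; apply Rdiv_lt_0_compat; lra).
  set (dd := dl al C0).
  assert (Hg1 : Rpower (1 + C0) (- (2)) <= 1).
  { apply Rle_trans with (Rpower (1 + C0) 0). apply Rp_le_exp; lra. rewrite Rpower_O; lra. }
  assert (Hg0 : 0 < Rpower (1 + C0) (- (2))) by apply Rp_pos.
  assert (Hd : 0 < dd) by (unfold dd, dl; apply Rmult_lt_0_compat; [|auto]; nra).
  assert (Hd2 : dd <= al * (C0 / 2)).
  { unfold dd, dl. apply Rle_trans with (al * (C0/2) * 1); [apply Rmult_le_compat_l; [nra|lra]|lra]. }
  set (U0 := U al c1 C0 0).
  assert (HU0 : 0 < U0) by apply Rp_pos.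
  set (B := U0 + al * C0).
  assert (HB : 0 < B) by (unfold B; nra).
  set (K1 := al * (al + 1) * C0 ^ 2).
  assert (HK1 : 0 <= K1) by (unfold K1; pose proof (pow2_ge_0 C0); nra).
  set (Kc := C0 / 2 * (Rabs (ln B) + 1) / c1 + al * C0 / 2 + 2 * K1 / dd + U0).
  exists (q * Rpower dd (- q - 1) * Kc), 3%nat.
  intros n Hn. destruct n as [|m]; [lia|].
  set (n := S m).
  assert (Hn0 : 0 < INR n) by (apply lt_0_INR; lia).
  assert (Hln : 1 <= ln (INR n)).
  { eapply Rle_trans; [apply ln3|]. apply ln_le_mono; [lra|].
    replace 3 with (INR 3) by (simpl; ring). apply le_INR; lia. }
  set (Un := U al c1 C0 n).
  destruct (U_bounds al c1 C0 n Halpha Hc1 HC0) as [UL UU]. fold Un U0 dd in UL, UU.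
  set (W := al * M0 al c1 C0 n * INR n).
  assert (HW : W = al * Asum al c1 C0 m).
  { unfold W, M0, Asum. simpl pred. unfold n. field. apply Rgt_not_eq; auto. }
  pose proof (Asum_lower al c1 C0 m HC) as AL. fold n in AL.
  assert (HWl : dd * INR n <= W).
  { rewrite HW. apply Rle_trans with (al * (C0 / 2) * INR n).
    apply Rmult_le_compat_r; lra.
    rewrite Rmult_assoc. apply Rmult_le_compat_l; lra. }
  assert (HUl : dd * INR n <= Un) by nra.
  pose proof (sum_main al c1 C0 m Halpha Hc1 HC0) as SM. fold n in SM.
  pose proof (Vsum_bound al c1 C0 m Halpha Hc1 HC0) as VB. fold n dd in VB.
  fold U0 Un K1 in SM. rewrite <- HW in SM.
  assert (HP0 : 0 <= Pot c1 (xseq al c1 C0 0)).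
  { unfold Pot. destruct (archimed (- ln (xseq al c1 C0 0) / c1)) as [a _].
    simpl xseq in *. assert (ln (1/2) < 0) by (rewrite <- ln_1; apply ln_increasing; lra).
    assert (0 < - ln (1 / 2) / c1) by (apply Rdiv_lt_0_compat; lra). lra. }
  pose proof (xseq_range al c1 C0 n Halpha Hc1 HC0) as Xr.
  assert (HPn : Pot c1 (xseq al c1 C0 n) <= ln Un / (al * c1) + 1).
  { unfold Pot. destruct (archimed (- ln (xseq al c1 C0 n) / c1)) as [_ b].
    unfold Un, U. rewrite ln_Rpower.
    replace (- al * ln (xseq al c1 C0 n) / (al * c1)) with (- ln (xseq al c1 C0 n) / c1)
      by (field; lra). lra. }
  assert (HlnU : ln Un <= ln B + ln (INR n)).
  { rewrite <- ln_mult by lra. apply ln_le_mono; [nra|].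
    unfold B. assert (1 <= INR n) by (replace 1 with (INR 1) by reflexivity; apply le_INR; lia).
    nra. }
  assert (Hdiff : Rabs (Un - W) <= Kc * ln (INR n)).
  { replace (Un - W) with ((Un - U0 - W) + U0) by ring.
    eapply Rle_trans; [apply Rabs_triang|]. rewrite (Rabs_pos_eq U0) by lra.
    assert (T1 : al * C0 / 2 * (Pot c1 (xseq al c1 C0 n) - Pot c1 (xseq al c1 C0 0))
                 <= C0 / 2 * (Rabs (ln B) + 1) / c1 * ln (INR n) + al * C0 / 2 * ln (INR n)).
    { assert (al * C0 / 2 * (Pot c1 (xseq al c1 C0 n) - Pot c1 (xseq al c1 C0 0))
              <= al * C0 / 2 * (ln Un / (al * c1) + 1)) by
        (apply Rmult_le_compat_l; [nra|lra]).
      replace (al * C0 / 2 * (ln Un / (al * c1) + 1)) with (C0 / 2 / c1 * ln Un + al * C0 / 2)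
        in H by (field; lra).
      assert (C0 / 2 / c1 * ln Un <= C0 / 2 / c1 * (ln B + ln (INR n))) by
        (apply Rmult_le_compat_l; [unfold Rdiv; apply Rmult_le_pos; [lra|left; apply Rinv_0_lt_compat; lra]|lra]).
      assert (ln B <= Rabs (ln B) * ln (INR n)).
      { pose proof (Rle_abs (ln B)). pose proof (Rabs_pos (ln B)). nra. }
      assert (C0 / 2 / c1 * ln B <= C0 / 2 / c1 * (Rabs (ln B) * ln (INR n))) by
        (apply Rmult_le_compat_l; [unfold Rdiv; apply Rmult_le_pos; [lra|left; apply Rinv_0_lt_compat; lra]|lra]).
      replace (C0 / 2 * (Rabs (ln B) + 1) / c1 * ln (INR n)) with
        (C0 / 2 / c1 * (Rabs (ln B) * ln (INR n)) + C0/2/c1 * ln (INR n)) by (field; lra).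
      nra. }
    assert (T2 : K1 * Vsum al c1 C0 m <= 2 * K1 / dd * ln (INR n)).
    { apply Rle_trans with (K1 * (/ dd * (1 + ln (INR n)))).
      apply Rmult_le_compat_l; auto.
      replace (2 * K1 / dd * ln (INR n)) with (K1 * (/ dd * (2 * ln (INR n)))) by (field; lra).
      apply Rmult_le_compat_l; auto. apply Rmult_le_compat_l; [left; apply Rinv_0_lt_compat; auto|lra]. }
    unfold Kc. nra. }
  assert (HX : xseq al c1 C0 n = Rpower Un (- q)) by (unfold Un, U, q; rewrite Rp_inv_inv; lra).
  rewrite HX. fold W. rewrite <- Rpower_Ropp. fold q.
  eapply Rle_trans; [apply (mvt_abs q W Un (dd * INR n)); auto; apply Rmult_lt_0_compat; auto|].
  rewrite <- Rpower_mult_distr by auto.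
  unfold Rdiv. rewrite <- Rpower_Ropp. replace (- (1 + q)) with (- q - 1) by ring.
  pose proof (Rp_pos dd (- q - 1)). pose proof (Rp_pos (INR n) (- q - 1)).
  assert (q * (Rpower dd (- q - 1) * Rpower (INR n) (- q - 1)) * Rabs (Un - W) <=
          q * (Rpower dd (- q - 1) * Rpower (INR n) (- q - 1)) * (Kc * ln (INR n))).
  { apply Rmult_le_compat_l; auto. apply Rmult_le_pos; [lra|]. apply Rmult_le_pos; lra. }
  lra.
Qed.
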